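(* Let \(a,b,c\) be positive integers, \(m\) a positive integer that is not a perfect square, with \(\gcd(a,b^2-c^2m)=1\), and let \(A,B\in\mathbb Z\). If \((x_0,y_0,z_0,w_0)\in\mathbb Z^4\) and \((x',y',z',w')\in\mathbb Z^4\) are both solutions of \(a(x+y\sqrt m)+(b+c\sqrt m)(z+w\sqrt m)=A+B\sqrt m\), then \(a\mid z_0-z'\) and \(a\mid w_0-w'\). *)

(* Defs.v *)
From mathcomp Require Import all_boot all_order all_algebra.
Set Implicit Arguments. Unset Strict Implicit. Unset Printing Implicit Defensive.
Import Order.TTheory GRing.Theory Num.Theory.
Local Open Scope ring_scope.

Definition qsqrt (R : rcfType) (m u v : int) : R :=
  u%:~R + v%:~R * Num.sqrt (m%:~R : R).

Definition is_square (m : int) : Prop := exists k : int, m = k ^+ 2.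

(* Main.v *)
Require Import Defs.
From mathcomp Require Import all_boot all_order all_algebra.
From mathcomp Require Import ring lra zify.
Import Order.TTheory GRing.Theory Num.Theory.
Local Open Scope ring_scope.

Lemma sq_int (m p q : int) : 0 < m -> q != 0 -> p ^+ 2 = m * q ^+ 2 -> is_square m.
Proof.
move=> hm hq e.
have en : (`|p| ^ 2 = `|m| * `|q| ^ 2)%N by rewrite -!abszX -abszM e.
have hd : (`|q| ^ 2 %| `|p| ^ 2)%N by rewrite en dvdn_mull.
rewrite dvdn_pexp2r // in hd.
have hq0 : (0 < `|q|)%N by rewrite absz_gt0.
have ep := divnK hd.
move: en; rewrite -ep expnMn => en.
have ek : (`|m| = (`|p| %/ `|q|) ^ 2)%N.
  have h2 : (0 < `|q| ^ 2)%N by rewrite expn_gt0 hq0.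
  apply/eqP; rewrite -(eqn_pmul2r h2); apply/eqP.
  by rewrite -en.
exists ((`|p| %/ `|q|)%N%:Z).
rewrite -(gtz0_abs hm) ek. lia.
Qed.

Lemma irr (R : rcfType) (m p q : int) : 0 < m -> ~ is_square m ->
  p%:~R + q%:~R * Num.sqrt (m%:~R : R) = 0 -> p = 0 /\ q = 0.
Proof.
move=> hm hsq e.
have hs : Num.sqrt (m%:~R : R) ^+ 2 = m%:~R by rewrite sqr_sqrtr // ler0z ltW.
have hq : q = 0.
  apply/eqP; apply/negPn/negP => hq; apply: hsq; apply: (@sq_int m p q hm hq).
  apply/eqP; rewrite -(eqr_int R) !(rmorphXn, rmorphM) /=.
  have -> : (p%:~R : R) = - (q%:~R * Num.sqrt (m%:~R : R)) by apply/eqP; rewrite -addr_eq0 e.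
  by rewrite sqrrN exprMn hs mulrC.
split=> //; move: e; rewrite hq mul0r addr0 => /eqP; rewrite intr_eq0 => /eqP //.
Qed.

Theorem lemma3 (R : rcfType) (a b c m A B : int)
  (ha : 0 < a) (hb : 0 < b) (hc : 0 < c) (hm : 0 < m) (hsq : ~ is_square m)
  (hgcd : gcdz a (b ^+ 2 - c ^+ 2 * m) = 1)
  (x0 y0 z0 w0 x' y' z' w' : int)
  (h0 : a%:~R * qsqrt R m x0 y0 + qsqrt R m b c * qsqrt R m z0 w0 = qsqrt R m A B)
  (h1 : a%:~R * qsqrt R m x' y' + qsqrt R m b c * qsqrt R m z' w' = qsqrt R m A B) :
  (a %| z0 - z')%Z /\ (a %| w0 - w')%Z.
Proof.
set s := Num.sqrt (m%:~R : R).
have hs : s * s = m%:~R by rewrite -expr2 sqr_sqrtr // ler0z ltW.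
set X := x0 - x'; set Y := y0 - y'; set Z := z0 - z'; set W := w0 - w'.
have key : (a * X + b * Z + c * m * W)%:~R + (a * Y + b * W + c * Z)%:~R * s = 0 :> R.
  have -> : (a * X + b * Z + c * m * W)%:~R + (a * Y + b * W + c * Z)%:~R * s =
     (a%:~R * qsqrt R m x0 y0 + qsqrt R m b c * qsqrt R m z0 w0)
     - (a%:~R * qsqrt R m x' y' + qsqrt R m b c * qsqrt R m z' w')
     + (c * W)%:~R * (m%:~R - s * s) :> R.
    rewrite /qsqrt /X /Y /Z /W -/s; ring.
  by rewrite h0 h1 subrr hs subrr mulr0 addr0.
have [e1 e2] := @irr R m _ _ hm hsq key.
have cop : coprimez a (b ^+ 2 - c ^+ 2 * m) by rewrite /coprimez hgcd.
split.
- rewrite -(Gauss_dvdzr _ cop).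
  have -> : (b ^+ 2 - c ^+ 2 * m) * Z = a * (c * m * Y - b * X).
    apply/eqP; rewrite -subr_eq0; apply/eqP.
    transitivity (b * (a * X + b * Z + c * m * W) - c * m * (a * Y + b * W + c * Z)); first ring.
    by rewrite e1 e2; ring.
  by rewrite dvdz_mulr.
- rewrite -(Gauss_dvdzr _ cop).
  have -> : (b ^+ 2 - c ^+ 2 * m) * W = a * (c * X - b * Y).
    apply/eqP; rewrite -subr_eq0; apply/eqP.
    transitivity (b * (a * Y + b * W + c * Z) - c * (a * X + b * Z + c * m * W)); first ring.
    by rewrite e1 e2; ring.
  by rewrite dvdz_mulr.
Qed.
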